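(* Let $B$ be a monoid, let $r\ge1$, let $A=B\langle x_0,\dots,x_r\rangle$ and $X=\operatorname{MProj}(A)$. Then for every integer $n$, $\Gamma(X,\mathcal{O}_X(n))=A_n$.
   Context: A monoid is a commutative associative monoid with identity $1$ and absorbing element $0$. $B\langle x_0,\dots,x_r\rangle$ is the graded monoid with $A_0=B$ and $A_n=\{b\,x_0^{i_0}\cdots x_r^{i_r}: b\in B,\ i_j\ge0,\ i_0+\dots+i_r=n\}$ (so each $x_i$ has degree $1$, and $A_n$ contains only the zero element for $n<0$), with multiplication $(b x^{i})(b' x^{j})=bb'x^{i+j}$ (multi-index notation). For homogeneous $f$, $A_f$ is the localization at $\{1,f,f^2,\dots\}$, graded by $\deg(a/f^k)=\deg a-k\deg f$, and $A_{(f)}$ is its degree-$0$ part. $X=\operatorname{MProj}(A)$ is the set of prime ideals of $A$ not containing $A_{\ge1}$, with the Zariski topology, covered by the opens $D_+(x_i)\cong\operatorname{MSpec}(A_{(x_i)})$, with $\mathcal O_X|_{D_+(f)}\cong\widetilde{A_{(f)}}$. $A(n)$ is the graded $A$-module with $A(n)_i=A_{i+n}$ and $\mathcal{O}_X(n)$ is the sheaf $\widetilde{A(n)}$ whose sections on $D_+(f)$ are the degree-$0$ elements of the localization $A(n)_f$, i.e. the degree-$n$ elements of $A_f$. The equality identifies $a\in A_n$ with the global section given by $a/1$ on each $D_+(x_i)$. *)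

(* Defs.v *)
From mathcomp Require Import all_boot all_order all_algebra.
Set Implicit Arguments. Unset Strict Implicit. Unset Printing Implicit Defensive.
Import GRing.Theory Num.Theory.

Record monoid0 := Monoid0 {
  mcar :> Type;
  mmul : mcar -> mcar -> mcar;
  mone : mcar;
  mzero : mcar;
  mmulA : forall a b c, mmul a (mmul b c) = mmul (mmul a b) c;
  mmulC : forall a b, mmul a b = mmul b a;
  mmul1 : forall a, mmul mone a = a;
  mmul0 : forall a, mmul mzero a = mzero
}.

Section PolyMonoid.
Variables (B : monoid0) (r : nat).

(** Elements of A = B<x_0,...,x_r>: [None] is the zero element, and
    [Some (b, e)] is b x_0^(e 0) ... x_r^(e r).  Equality in A is [A_eq]
    (all b x^e with b = 0 are identified with 0). *)
Definition Aelt := option (mcar B * ('I_r.+1 -> nat)).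

Definition A_eq (a a' : Aelt) : Prop :=
  match a, a' with
  | None, None => True
  | None, Some (b, _) => b = mzero B
  | Some (b, _), None => b = mzero B
  | Some (b, e), Some (b', e') =>
      (b = b' /\ forall j, e j = e' j) \/ (b = mzero B /\ b' = mzero B)
  end.

Definition A_mul (a a' : Aelt) : Aelt :=
  match a, a' with
  | Some (b, e), Some (b', e') => Some (mmul b b', fun j => (e j + e' j)%N)
  | _, _ => None
  end.

Definition A_one : Aelt := Some (mone B, fun _ => 0%N).

Definition A_pow (a : Aelt) (k : nat) : Aelt := iter k (A_mul a) A_one.

Definition var (i : 'I_r.+1) : Aelt :=
  Some (mone B, fun j => if j == i then 1%N else 0%N).

(** a \in A_n  (n an integer; for n < 0 only the zero element) *)
Definition in_deg (n : int) (a : Aelt) : Prop :=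
  match a with
  | None => True
  | Some (b, e) => b = mzero B \/ (Posz (\sum_j e j)%N = n)
  end.

(** Localization A_f: a fraction (a, k) stands for a / f^k. *)
Definition lfrac := (Aelt * nat)%type.

Definition loc_eq (f : Aelt) (s s' : lfrac) : Prop :=
  exists m : nat,
    A_eq (A_mul (A_pow f (m + s'.2)) s.1) (A_mul (A_pow f (m + s.2)) s'.1).

(** s is a degree-n element of A_f, where f is homogeneous of degree d:
    deg(a / f^k) = deg a - k d. *)
Definition loc_deg (f : Aelt) (d : nat) (n : int) (s : lfrac) : Prop :=
  exists (a : Aelt) (k : nat), loc_eq f s (a, k) /\ in_deg (n + Posz (k * d)%N)%R a.

(** Localization map A_f -> A_{fg}: a / f^k |-> a g^k / (fg)^k. *)
Definition loc_res (g : Aelt) (s : lfrac) : lfrac := (A_mul s.1 (A_pow g s.2), s.2).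

(** Global sections of O_X(n) on X = MProj(A), computed through the open
    cover D_+(x_i) (sections: degree-n elements of A_{x_i}), whose pairwise
    intersections are D_+(x_i x_j) (sections: degree-n elements of
    A_{x_i x_j}). *)
Definition global_section (n : int) (s : 'I_r.+1 -> lfrac) : Prop :=
  (forall i, loc_deg (var i) 1 n (s i)) /\
  (forall i j, loc_eq (A_mul (var i) (var j))
                      (loc_res (var j) (s i)) (loc_res (var i) (s j))).

Definition section_eq (s s' : 'I_r.+1 -> lfrac) : Prop :=
  forall i, loc_eq (var i) (s i) (s' i).

Definition section_of (a : Aelt) : 'I_r.+1 -> lfrac := fun _ => (a, 0%N).

End PolyMonoid.

(* Main.v *)
Require Import Defs.
From mathcomp Require Import all_boot all_order all_algebra.
From mathcomp Require Import zify.
From Stdlib Require Import Classical.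
Import GRing.Theory.
Set Implicit Arguments. Unset Strict Implicit.

Section Aux.
Variables (B : monoid0) (r : nat).

Definition coef (a : Aelt B r) : B := match a with None => mzero B | Some (b, _) => b end.
Definition expo (a : Aelt B r) (t : 'I_r.+1) : nat :=
  match a with None => 0%N | Some (_, e) => e t end.

Lemma mmul0r (a : B) : mmul a (mzero B) = mzero B.
Proof. by rewrite mmulC mmul0. Qed.

Lemma Aeq_iff (a a' : Aelt B r) :
  A_eq a a' <-> coef a = coef a' /\ (coef a = mzero B \/ forall j, expo a j = expo a' j).
Proof.
case: a => [[b e]|]; case: a' => [[b' e']|] /=.
- split.
  + case=> [[-> H]|[-> ->]]; [by split; [|right] | by split; [|left]].
  + case=> -> [->|H]; [by right | by left].
- by split; [move=> ->; split => //; left | case].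
- by split; [move=> ->; split => //; left | case=> <-].
- by split => _; split => //; left.
Qed.

Lemma coef_mul (a a' : Aelt B r) : coef (A_mul a a') = mmul (coef a) (coef a').
Proof.
case: a => [[b e]|]; case: a' => [[b' e']|] //=; by rewrite ?mmul0 ?mmul0r.
Qed.

Lemma expo_mul (a a' : Aelt B r) t : coef (A_mul a a') <> mzero B ->
  expo (A_mul a a') t = (expo a t + expo a' t)%N.
Proof. case: a => [[b e]|]; case: a' => [[b' e']|] //=. Qed.

Lemma pow_some u k : exists e, A_pow (Some (mone B, u) : Aelt B r) k = Some (mone B, e) /\
  forall t, e t = (k * u t)%N.
Proof.
elim: k => [|k [e [He He']]].
  by exists (fun _ => 0%N); split => // t; rewrite mul0n.
change (exists e0, A_mul (Some (mone B, u) : Aelt B r) (A_pow (Some (mone B, u) : Aelt B r) k) = Some (mone B, e0) /\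
  (forall t, e0 t = (k.+1 * u t)%N)).
rewrite He /= mmul1; eexists; split; first reflexivity.
by move=> t /=; rewrite He' mulSn.
Qed.

Lemma coef_pow u k : coef (A_pow (Some (mone B, u) : Aelt B r) k) = mone B.
Proof. by have [e [-> _]] := pow_some u k. Qed.

Lemma expo_pow u k t : expo (A_pow (Some (mone B, u) : Aelt B r) k) t = (k * u t)%N.
Proof. by have [e [-> H]] := pow_some u k; rewrite /= H. Qed.

Lemma mulvar (i j : 'I_r.+1) : A_mul (var B i) (var B j) =
  Some (mone B, fun t => ((if t == i then 1 else 0) + (if t == j then 1 else 0))%N).
Proof. by rewrite /A_mul /var mmul1. Qed.

Lemma sum_helper (F G : 'I_r.+1 -> nat) i x y :
  (forall t, (if t == i then x else 0) + F t = (if t == i then y else 0) + G t)%N ->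
  (x + \sum_t F t = y + \sum_t G t)%N.
Proof.
move=> H.
have : (\sum_t ((if t == i then x else 0) + F t) = \sum_t ((if t == i then y else 0) + G t))%N.
  by apply: eq_bigr => t _; apply: H.
by rewrite !big_split /= -!big_mkcond /= !big_pred1_eq.
Qed.


Lemma Aeq_refl (a : Aelt B r) : A_eq a a.
Proof. by apply/Aeq_iff; split => //; right. Qed.

Lemma eq_shift (p p' a a' : Aelt B r) : coef p = mone B -> coef p' = mone B ->
  A_eq (A_mul p a) (A_mul p' a') <->
  coef a = coef a' /\ (coef a = mzero B \/ forall t, (expo p t + expo a t = expo p' t + expo a' t)%N).
Proof.
move=> Hp Hp'; rewrite Aeq_iff !coef_mul Hp Hp' !mmul1.
split; case=> Hc H; split => //.
- case: (classic (coef a = mzero B)) => [|Hn]; [by left | right].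
  case: H => [//|H] t; have := H t.
  rewrite !expo_mul //; rewrite coef_mul ?Hp ?Hp' mmul1 //; by rewrite -Hc.
- case: (classic (coef a = mzero B)) => Hn; [by left | right] => t.
  case: H => [//|H]; have := H t.
  rewrite !expo_mul //; rewrite coef_mul ?Hp ?Hp' mmul1 //; by rewrite -Hc.
Qed.

Lemma coef_powvar (i : 'I_r.+1) k : coef (A_pow (var B i) k) = mone B.
Proof. exact: coef_pow. Qed.

Lemma expo_powvar (i : 'I_r.+1) k t :
  expo (A_pow (var B i) k) t = if t == i then k else 0%N.
Proof. rewrite (expo_pow (fun j => if j == i then 1%N else 0%N)); by case: (t == i); rewrite ?muln1 ?muln0. Qed.

Lemma coef_mulr1 (a : Aelt B r) (i : 'I_r.+1) k :
  coef (A_mul a (A_pow (var B i) k)) = coef a.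
Proof. by rewrite coef_mul coef_powvar mmulC mmul1. Qed.

Lemma expo_mulr (a : Aelt B r) (i : 'I_r.+1) k t : coef a <> mzero B ->
  expo (A_mul a (A_pow (var B i) k)) t = (expo a t + if t == i then k else 0)%N.
Proof. by move=> H; rewrite expo_mul ?coef_mulr1 // expo_powvar. Qed.

Lemma in_deg_iff n (a : Aelt B r) :
  in_deg n a <-> coef a = mzero B \/ Posz (\sum_t expo a t)%N = n.
Proof. by case: a => [[b e]|] //=; split => //; left. Qed.

Lemma compat_fact (i j : 'I_r.+1) (p p' : lfrac B r) :
  loc_eq (A_mul (var B i) (var B j)) (loc_res (var B j) p) (loc_res (var B i) p') ->
  coef p.1 = coef p'.1 /\ (coef p.1 = mzero B \/ forall t,
    (expo p.1 t + (if t == j then p'.2 else 0) = expo p'.1 t + (if t == i then p.2 else 0))%N).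
Proof.
case=> m; rewrite /loc_res mulvar.
move/eq_shift; rewrite !coef_pow => /(_ erefl erefl) [].
rewrite !coef_mulr1 => Hc H; split => //.
case: (classic (coef p.1 = mzero B)) => Hn; [by left | right] => t.
case: H => [//|H]; have := H t.
rewrite !expo_pow !expo_mulr //; last by rewrite -Hc.
by case: (t == i); case: (t == j) => /=; lia.
Qed.

Lemma deg_fact n (i : 'I_r.+1) (p : lfrac B r) :
  loc_deg (var B i) 1 n p -> coef p.1 <> mzero B ->
  Posz (\sum_t expo p.1 t)%N = (n + Posz p.2)%R.
Proof.
case=> c [l [[m Hm] Hc]] Hn.
move: Hm => /eq_shift. rewrite !coef_powvar => /(_ erefl erefl) [Hcc H].
case: H => [H|H]; first by case: Hn.
move/in_deg_iff: Hc => [Hc|Hc]; first by case: Hn; rewrite Hcc.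
have H' : forall t, ((if t == i then m + l else 0) + expo p.1 t = (if t == i then m + p.2 else 0) + expo c t)%N.
  move=> t; have := H t; rewrite !expo_powvar /=.
  by case: (t == i).
have Hs := @sum_helper (fun t => expo p.1 t) (fun t => expo c t) i (m + l) (m + p.2) H'.
rewrite /= muln1 in Hc.
move: Hs Hc; set S1 := (\sum_t expo p.1 t)%N; set S2 := (\sum_t expo c t)%N.
move: S1 S2 => S1 S2 Hs Hc.
clear H H' Hcc Hn; lia.
Qed.

End Aux.

Theorem mainTheorem6 (B : monoid0) (r : nat) (hr : (1 <= r)%N) (n : int) :
  (forall a : Aelt B r, in_deg n a -> global_section n (section_of a)) /\
  (forall s : 'I_r.+1 -> lfrac B r, global_section n s ->
     exists a : Aelt B r, in_deg n a /\ section_eq s (section_of a)) /\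
  (forall a a' : Aelt B r, in_deg n a -> in_deg n a' ->
     section_eq (section_of a) (section_of a') -> A_eq a a').
Proof.
split.
  move=> a Ha; split.
    move=> i; exists a, 0%N; split; first by exists 0%N; apply: Aeq_refl.
    by rewrite mul0n addr0.
  by move=> i j; exists 0%N; apply: Aeq_refl.
split; last first.
  move=> a a' _ _ H.
  have [m /eq_shift] := H ord0.
  rewrite !coef_powvar => /(_ erefl erefl) /= [Hc Hd].
  apply/Aeq_iff; split => //.
  case: Hd => [|Hd]; [by left | right] => t.
  by have := Hd t; lia.
move=> s [Hdeg Hcomp].
have Cc : forall i j, coef (s i).1 = coef (s j).1.
  by move=> i j; have [] := @compat_fact _ _ _ _ _ _ (Hcomp i j).
case: (classic (exists i, coef (s i).1 = mzero B)) => [[i0 Hi0]|Hnz].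
  exists None; split => // i; exists 0%N.
  apply/eq_shift; rewrite ?coef_powvar //=; split; last by left; rewrite (Cc i i0).
  by rewrite (Cc i i0).
have Hn : forall i, coef (s i).1 <> mzero B by move=> i Hi; apply: Hnz; exists i.
have Ex : forall i j t, (expo (s i).1 t + (if t == j then (s j).2 else 0) =
    expo (s j).1 t + (if t == i then (s i).2 else 0))%N.
  move=> i j t; have [_ [H|H]] := @compat_fact _ _ _ _ _ _ (Hcomp i j); first by case: (Hn i).
  exact: H.
pose i0 : 'I_r.+1 := ord0.
pose j0 : 'I_r.+1 := lift ord0 (Ordinal hr).
have Hj0 : (i0 == j0) = false by apply/negbTE; exact: neq_lift.
have Hk0 : ((s i0).2 <= expo (s i0).1 i0)%N.
  have := Ex i0 j0 i0; rewrite Hj0 eqxx; lia.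
have [e He] : exists e : 'I_r.+1 -> nat, forall t,
    e t = (expo (s i0).1 t - (if t == i0 then (s i0).2 else 0))%N by eexists.
have key : forall i t, expo (s i).1 t = (e t + if t == i then (s i).2 else 0)%N.
  move=> i t; rewrite He; have h1 := Ex i0 i t.
  case: (eqVneq t i0) => [Et|Nt].
    rewrite Et eqxx in h1 *.
    by case: (i0 == i) in h1 *; lia.
  rewrite (negbTE Nt) in h1 *.
  by case: (t == i) in h1 *; lia.
exists (Some (coef (s i0).1, e)); split.
  apply/in_deg_iff; right => /=.
  have Hd := @deg_fact _ _ _ _ _ (Hdeg i0) (Hn i0).
  have Hs := @sum_helper r (fun t => expo (s i0).1 t) e i0 0 (s i0).2.
  have H' : forall t, ((if t == i0 then 0 else 0) + expo (s i0).1 t = (if t == i0 then (s i0).2 else 0) + e t)%N.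
    by move=> t; rewrite key; case: (t == i0); lia.
  move: (Hs H') Hd; set S1 := (\sum_t expo (s i0).1 t)%N; set S2 := (\sum_t e t)%N.
  move: S1 S2 => S1 S2; clear; lia.
move=> i; exists 0%N.
apply/eq_shift; rewrite ?coef_powvar //=; split; first exact: Cc.
right => t; rewrite !expo_powvar key.
by case: (t == i); lia.
Qed.
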